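(* Let $X$, $Y$ be real Banach spaces, $\Omega$ a measure space, $Z:=L^2(\Omega)$, and $e:Y\to Z$ a linear continuous dense embedding. Let $f:X\to\mathbb{R}$ and $g:X\to Y$ be continuously Fréchet differentiable, and assume that $y\mapsto|y|$ is well-defined and continuous on $Y$. Let $(x^k)$ be generated by the augmented Lagrangian algorithm described in the context, where in Step 2 the iterate $x^{k+1}$ is chosen such that $L_{\rho_k}'(x^{k+1},w^k)\to 0$ in $X^*$, and assume $\rho_k\to\infty$. Then every (strong) limit point $\bar x$ of $(x^k)$ which is feasible ($g(\bar x)\le 0$) satisfies the AKKT conditions: there exist sequences $y^k\to\bar x$ in $X$ and $(\mu^k)\subset K_Y^+$ with $f'(y^k)+g'(y^k)^*\mu^k\to 0$ and $\langle\mu^k,g_-(y^k)\rangle\to 0$.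
   Context: The order on $Y$ is induced by $Z$: $K_Y:=\{y\in Y:e(y)\ge 0\text{ a.e.}\}$, $y\le 0$ means $-y\in K_Y$; $K_Y^+:=\{\mu\in Y^*:\langle\mu,y\rangle\ge 0\ \forall y\in K_Y\}$, with $\langle\cdot,\cdot\rangle$ the duality pairing of $Y^*$ and $Y$; $Z\cong Z^*$ is regarded as a subspace of $Y^*$ via $e^*$. For $z\in Z$, $z_+:=\max\{z,0\}$, $z_-:=\max\{-z,0\}$ pointwise; $|y|, y_\pm$ for $y\in Y$ are defined via these pointwise operations (''well-defined on $Y$'' means they land in $Y$); $g_-(x):=(g(x))_-$. The augmented Lagrangian is $L_\rho(x,\lambda):=f(x)+\frac{\rho}{2}\|(g(x)+\lambda/\rho)_+\|_Z^2$, with $x$-derivative $f'(x)+g'(x)^*(\lambda+\rho g(x))_+$. Algorithm: (S.0) Choose $(x^0,\lambda^0)\in X\times Z$, $\rho_0>0$, $w^{\max}\in Z$ with $w^{\max}\ge 0$, $\gamma>1$, $\tau\in(0,1)$; $k=0$. (S.2) Choose $w^k\in Z$ with $0\le w^k\le w^{\max}$ a.e. and compute an approximate minimizer $x^{k+1}$ of $L_{\rho_k}(\cdot,w^k)$. (S.3) Set $\lambda^{k+1}:=(w^k+\rho_k g(x^{k+1}))_+$. If $k=0$ or $\|\min\{-g(x^{k+1}),w^k/\rho_k\}\|_Z\le\tau\|\min\{-g(x^k),w^{k-1}/\rho_{k-1}\}\|_Z$ (pointwise min), set $\rho_{k+1}:=\rho_k$; else $\rho_{k+1}:=\gamma\rho_k$.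 (S.4) $k\leftarrow k+1$, go to (S.2). The algorithm is run without stopping. *)

(* Defs.v *)
From HB Require Import structures.
From mathcomp Require Import all_boot all_order all_algebra.
From mathcomp Require Import all_classical all_reals all_analysis.
Set Implicit Arguments. Unset Strict Implicit. Unset Printing Implicit Defensive.
Import Order.TTheory GRing.Theory Num.Theory.
Import numFieldNormedType.Exports.
Local Open Scope classical_set_scope.
Local Open Scope ring_scope.

(* Elements of Z = L^2(Omega) are represented by measurable real functions with
   finite L^2 norm; all (in)equalities in Z are understood mu-a.e. *)
Definition L2 d (T : measurableType d) (R : realType)
  (mu : {measure set T -> \bar R}) (z : T -> R) : Prop :=
  measurable_fun setT z /\ finite_norm mu 2%:E z.

Definition nrm2 d (T : measurableType d) (R : realType)
  (mu : {measure set T -> \bar R}) (z : T -> R) : \bar R :=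
  Lnorm mu 2%:E (EFin \o z).

Definition ipZ d (T : measurableType d) (R : realType)
  (mu : {measure set T -> \bar R}) (z1 z2 : T -> R) : R :=
  fine (\int[mu]_t (z1 t * z2 t)%:E)%E.

Definition pos_part (T : Type) (R : realType) (z : T -> R) : T -> R :=
  fun t => Num.max (z t) 0.

Definition C1_map (R : realType) (V W : normedModType R) (F : V -> W) : Prop :=
  (forall x, differentiable F x) /\
  (forall (x : V) (eps : R), 0 < eps -> exists2 del : R, 0 < del &
     forall x' : V, `|x' - x| < del -> forall h : V, `|'d F x' h - 'd F x h| <= eps * `|h|).

(* a sequence of functionals phi_k on V converges to 0 in the dual norm of V^* *)
Definition dual_cvg0 (R : realType) (V : normedModType R) (phi : nat -> V -> R) : Prop :=
  forall eps : R, 0 < eps -> \forall k \near \oo, forall h : V, `|phi k h| <= eps * `|h|.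

Definition dual_elt (R : realType) (V : normedModType R) (m : V -> R) : Prop :=
  (forall (a : R) (u v : V), m (a *: u + v) = a * m u + m v) /\ continuous m.

(* Main.v *)
Require Import Defs.
From HB Require Import structures.
From mathcomp Require Import all_boot all_order all_algebra.
From mathcomp Require Import all_classical all_reals all_analysis.
From mathcomp Require Import ring lra.
Import Order.TTheory GRing.Theory Num.Theory.
Import numFieldNormedType.Exports.
Local Open Scope classical_set_scope.
Local Open Scope ring_scope.

Section L2facts.
Context (R : realType) (d : measure_display) (T : measurableType d)
  (mu : {measure set T -> \bar R}).

Lemma L2_Lfun z : L2 mu z <-> z \in Lfun mu 2%:E.
Proof.
split.
  by case=> mz fz; rewrite inE; apply/andP; split; rewrite inE.
by rewrite inE => /andP[]; rewrite !inE.
Qed.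

Lemma L2_meas z : L2 mu z -> measurable_fun setT z.
Proof. by case. Qed.

Lemma L2_int a b : L2 mu a -> L2 mu b ->
  mu.-integrable setT (fun t => (a t * b t)%:E).
Proof.
move=> /L2_Lfun ha /L2_Lfun hb.
by have /Lfun1_integrable := Lfun2_mul_Lfun1 ha hb.
Qed.

Lemma L2D a b : L2 mu a -> L2 mu b -> L2 mu (fun t => a t + b t).
Proof.
move=> /L2_Lfun ha /L2_Lfun hb; apply/L2_Lfun.
have := (@Lfun_submod_closed _ _ _ mu _ (lee1n 2)).
case => _ /(_ 1 a b ha hb).
by rewrite scale1r.
Qed.

Lemma L2Z r a : L2 mu a -> L2 mu (fun t => r * a t).
Proof.
move=> /L2_Lfun ha; apply/L2_Lfun.
have h12 : (1 <= 2 :> R) by rewrite ler1n.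
have := (@Lfun_scale _ _ _ mu a r 2 h12 ha).
suff -> : (fun t => r * a t) = (r \o* a) by [].
by apply/funext => t /=; rewrite mulrC.
Qed.

Lemma L2_abs a : L2 mu a -> L2 mu (fun t => `|a t|).
Proof.
case=> ma fa; split; first exact: measurableT_comp.
rewrite /finite_norm.
under [X in (Lnorm _ _ X < _)%E]eq_fun => x do rewrite /= -abse_EFin.
by rewrite (Lnorm_abse mu (EFin \o a)).
Qed.

Lemma L2_pos a : L2 mu a -> L2 mu (pos_part a).
Proof.
move=> ha.
have -> : pos_part a = (fun t => 2^-1 * (a t + `|a t|)).
  apply/funext => t; rewrite /pos_part.
  case: (leP 0 (a t)) => h.
    by rewrite ger0_norm //; field.
  by rewrite ltr0_norm // subrr mulr0.
by apply: L2Z; apply: L2D => //; exact: L2_abs.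
Qed.


Lemma ipZ_lin a b c r : L2 mu a -> L2 mu b -> L2 mu c ->
  ipZ mu a (fun t => r * b t + c t) = r * ipZ mu a b + ipZ mu a c.
Proof.
move=> ha hb hc; rewrite /ipZ.
under eq_integral => t _ do rewrite mulrDr mulrCA EFinD EFinM.
rewrite integralD //; last exact: L2_int.
  rewrite integralZl //; last exact: L2_int.
  rewrite fineD ?fin_numM ?integrable_fin_num //; try exact: L2_int.
  by rewrite fineM // integrable_fin_num //; exact: L2_int.
apply: integrableZl => //; exact: L2_int.
Qed.

Lemma ipZ_ae a b b' : L2 mu a -> L2 mu b -> L2 mu b' ->
  {ae mu, forall t, b t = b' t} -> ipZ mu a b = ipZ mu a b'.
Proof.
move=> ha hb hb' hae; rewrite /ipZ; congr fine.
apply: ae_eq_integral => //.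
- have := L2_int _ _ ha hb. move=> /measurable_int. exact.
- have := L2_int _ _ ha hb'. move=> /measurable_int. exact.
- by apply: filterS hae => t /= -> _.
Qed.

Lemma ipZ_ge0 a b : (forall t, 0 <= a t * b t) -> 0 <= ipZ mu a b.
Proof.
move=> h; rewrite /ipZ; apply: fine_ge0; apply: integral_ge0 => t _.
by rewrite lee_fin.
Qed.

Lemma ipZ_bound a b : L2 mu a -> L2 mu b ->
  (`|ipZ mu a b|%:E <= nrm2 mu a * nrm2 mu b)%E.
Proof.
move=> ha hb; rewrite /ipZ.
have hi := L2_int _ _ ha hb.
rewrite -abse_EFin fineK ?integrable_fin_num //.
apply: le_trans; first by apply: le_abse_integral => //; exact: (measurable_int mu hi).
rewrite -Lnorm1.
apply: (@hoelder _ _ _ mu a b 2 2) => //; try exact: L2_meas.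
by rewrite -div1r -splitr.
Qed.


Lemma ipZ_scale a b r : L2 mu a -> L2 mu b ->
  ipZ mu a (fun t => r * b t) = r * ipZ mu a b.
Proof.
move=> ha hb; rewrite /ipZ.
under eq_integral => t _ do rewrite mulrCA EFinM.
rewrite integralZl //; last exact: L2_int.
by rewrite fineM // integrable_fin_num //; exact: L2_int.
Qed.

Lemma ipZ_le a b c c' : L2 mu a -> L2 mu b -> L2 mu c -> L2 mu c' ->
  (forall t, 0 <= a t * b t) -> (forall t, 0 <= c t * c' t) ->
  {ae mu, forall t, a t * b t <= c t * c' t} -> ipZ mu a b <= ipZ mu c c'.
Proof.
move=> ha hb hc hc' h1 h2 hae; rewrite /ipZ.
apply: fine_le; try exact: integrable_fin_num (L2_int _ _ _ _).
apply: ae_ge0_le_integral => //.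
- by move=> t _; rewrite lee_fin.
- exact: (measurable_int mu (L2_int _ _ ha hb)).
- by move=> t _; rewrite lee_fin.
- exact: (measurable_int mu (L2_int _ _ hc hc')).
- by apply: filterS hae => t h _; rewrite lee_fin.
Qed.

End L2facts.

Lemma compl_bound (R : realFieldType) (w W r G : R) :
  0 <= w -> w <= W -> 0 < r ->
  Num.max (w + r * G) 0 * Num.max (-1 * G) 0 <= W * (r^-1 * W).
Proof.
move=> w0 wW r0.
have W0 : 0 <= W by lra.
have h0 : 0 <= W * (r^-1 * W) by rewrite mulr_ge0 // mulr_ge0 // invr_ge0 ltW.
case: (leP 0 G) => hG.
  have -> : Num.max (-1 * G) 0 = 0 by apply/max_idPr; lra.
  by rewrite mulr0.
have -> : Num.max (-1 * G) 0 = - G by rewrite mulN1r; apply/max_idPl; lra.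
case: (leP (w + r * G) 0) => h.
  by rewrite mul0r.
have -> : W * (r^-1 * W) = (W * W) / r by rewrite mulrCA mulrC.
rewrite ler_pdivlMr //.
have s0 : 0 <= r * (- G) by rewrite mulr_ge0 ?ltW //; lra.
have sq : 0 <= (w + 2 * r * G) ^+ 2 by exact: sqr_ge0.
have ww : w * w <= W * W by nra.
nra.
Qed.

Lemma near_sub (P : nat -> Prop) (j : nat -> nat) :
  (forall k, (k <= j k)%N) -> (\forall n \near \oo, P n) -> \forall k \near \oo, P (j k).
Proof.
move=> hj [N _ HN]; exists N => // k /= Hk; apply: HN => /=.
exact: leq_trans Hk (hj k).
Qed.
Lemma L2_nrm2 (R : realType) d (T : measurableType d) (mu : {measure set T -> \bar R}) a :
  L2 mu a -> nrm2 mu a = (fine (nrm2 mu a))%:E.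
Proof.
case=> _ fa; rewrite fineK // ge0_fin_numE //; last exact: Lnorm_ge0.
Qed.

Lemma dual_ipZ (R : realType) (Y : normedModType R)
  d (T : measurableType d) (mu : {measure set T -> \bar R})
  (e : Y -> T -> R)
  (e_L2 : forall y, L2 mu (e y))
  (e_lin : forall (a : R) (y1 y2 : Y),
      {ae mu, forall t, e (a *: y1 + y2) t = a * e y1 t + e y2 t})
  (e_cont : exists2 C : R, 0 <= C & forall y, (nrm2 mu (e y) <= (C * `|y|)%:E)%E)
  a : L2 mu a -> dual_elt (fun v => ipZ mu a (e v)).
Proof.
move=> ha.
have lin : forall (r : R) (u v : Y), ipZ mu a (e (r *: u + v)) = r * ipZ mu a (e u) + ipZ mu a (e v).
  move=> r u v; rewrite (@ipZ_ae _ _ _ mu a _ _ ha (e_L2 _) _ (e_lin r u v)).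
    by rewrite ipZ_lin.
  by apply: L2D => //; apply: L2Z.
split => //.
case: e_cont => C C0 hC.
set K := fine (nrm2 mu a) * C.
have K0 : 0 <= K by rewrite mulr_ge0 // fine_ge0 // Lnorm_ge0.
have bnd : forall v, `|ipZ mu a (e v)| <= K * `|v|.
  move=> v; rewrite -lee_fin; apply: le_trans; first exact: ipZ_bound.
  rewrite (@L2_nrm2 _ _ _ mu a ha) /K -mulrA EFinM; apply: lee_wpmul2l => //.
  by rewrite lee_fin fine_ge0 // Lnorm_ge0.
move=> v; apply/cvgrPdist_le => eps e0.
apply/nbhs_normP; exists (eps / (K + 1)).
  by rewrite /= divr_gt0 // ltr_wpDl.
move=> u /= huv.
have -> : ipZ mu a (e v) = ipZ mu a (e (v - u)) + ipZ mu a (e u).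
  by rewrite -[X in e X](_ : 1 *: (v - u) + u = v) ?lin ?mul1r // scale1r subrK.
rewrite addrK; apply: le_trans (bnd _) _.
have : `|v - u| <= eps / (K + 1) by exact: ltW.
rewrite ler_pdivlMr ?ltr_wpDl // => h.
have n0 := normr_ge0 (v - u); nra.
Qed.
Lemma nearAnd (R : realType) d (T : measurableType d) (mu : {measure set T -> \bar R})
  (P Q : T -> Prop) :
  {ae mu, forall t, P t} -> {ae mu, forall t, Q t} -> {ae mu, forall t, P t /\ Q t}.
Proof. by move=> hP hQ; apply: filterS2 hP hQ => t a b; split. Qed.

Lemma cvg_bound0 (R : realType) (u rho : nat -> R) (j : nat -> nat) (K : R) :
  0 <= K -> (forall k, (k <= j k)%N) -> (forall k, 0 <= u k <= (rho (j k))^-1 * K) ->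
  (forall k, 0 < rho k) -> rho @ \oo --> +oo -> u @ \oo --> 0.
Proof.
move=> K0 jk bnd rho_pos rho_infty.
apply/cvgr0Pnorm_le => eps e0.
have H := near_sub _ _ jk ((cvgryPge rho).1 rho_infty (K / eps)).
near=> k.
have hk : K / eps <= rho (j k) by near: k; exact: H.
have /andP[b1 b2] := bnd k.
rewrite ger0_norm //; apply: le_trans b2 _.
rewrite mulrC ler_pdivrMr //.
by rewrite ler_pdivrMr // in hk; rewrite mulrC.
Unshelve. all: by end_near.
Qed.

Lemma case_split (P : Prop) (A : Type) (a b c : A) :
  (P -> a = b) -> (~ P -> a = c) -> a = b \/ a = c.
Proof. by move=> h1 h2; case: (EM P) => h; [left; apply: h1|right; apply: h2]. Qed.

Theorem theorem6p4
  (R : realType) (X Y : completeNormedModType R)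
  (d : measure_display) (T : measurableType d) (mu : {measure set T -> \bar R})
  (* the dense continuous linear embedding e : Y -> Z = L^2(mu) *)
  (e : Y -> T -> R)
  (e_L2 : forall y, L2 mu (e y))
  (e_lin : forall (a : R) (y1 y2 : Y),
      {ae mu, forall t, e (a *: y1 + y2) t = a * e y1 t + e y2 t})
  (e_cont : exists2 C : R, 0 <= C & forall y, (nrm2 mu (e y) <= (C * `|y|)%:E)%E)
  (e_inj : forall y, {ae mu, forall t, e y t = 0} -> y = 0)
  (e_dense : forall z, L2 mu z -> forall eps : R, 0 < eps ->
      exists y, (nrm2 mu (fun t => (e y t - z t)%R) < eps%:E)%E)
  (* f and g continuously Frechet differentiable *)
  (f : X -> R^o) (g : X -> Y) (hf : C1_map f) (hg : C1_map g)
  (* y |-> |y| well-defined and continuous on Y *)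
  (absY : Y -> Y) (habs : forall y, {ae mu, forall t, e (absY y) t = `|e y t|})
  (habsc : continuous absY)
  (* the algorithm data *)
  (x : nat -> X) (lam : nat -> T -> R) (rho : nat -> R) (w : nat -> T -> R)
  (wmax : T -> R) (gamma tau : R)
  (S0_lam : L2 mu (lam 0%N)) (S0_rho : 0 < rho 0%N)
  (S0_wmax : L2 mu wmax) (S0_wmax0 : {ae mu, forall t, 0 <= wmax t})
  (S0_gamma : 1 < gamma) (S0_tau : 0 < tau < 1)
  (S2_w : forall k, L2 mu (w k) /\ {ae mu, forall t, 0 <= w k t <= wmax t})
  (S2_x : dual_cvg0 (fun k (h : X) =>
      'd f (x k.+1) h +
      ipZ mu (pos_part (fun t => w k t + rho k * e (g (x k.+1)) t))
             (e ('d g (x k.+1) h))))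
  (S3_lam : forall k, lam k.+1 = pos_part (fun t => w k t + rho k * e (g (x k.+1)) t))
  (S3_rho : forall k,
      let V := fun j => nrm2 mu (fun t => Num.min (- e (g (x j.+1)) t) (w j t / rho j)) in
      ((k = 0%N \/ (V k <= tau%:E * V k.-1)%E) -> rho k.+1 = rho k) /\
      (~ (k = 0%N \/ (V k <= tau%:E * V k.-1)%E) -> rho k.+1 = gamma * rho k))
  (rho_infty : rho @ \oo --> +oo) :
  forall xbar : X,
    (exists phi : nat -> nat, (forall n, (phi n < phi n.+1)%N) /\ (x \o phi) @ \oo --> xbar) ->
    {ae mu, forall t, e (g xbar) t <= 0} ->
    exists (y : nat -> X) (m : nat -> Y -> R),
      y @ \oo --> xbar /\
      (forall k, dual_elt (m k)) /\
      (forall k v, {ae mu, forall t, 0 <= e v t} -> 0 <= m k v) /\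
      dual_cvg0 (fun k (h : X) => 'd f (y k) h + m k ('d g (y k) h)) /\
      (fun k => m k (2^-1 *: (absY (g (y k)) - g (y k)))) @ \oo --> 0.
Proof.
move=> xbar [phi [phiS cphi]] feas.
have rho_pos : forall k, 0 < rho k.
  elim=> [|k IH] //.
  case: (S3_rho k) => h1 h2.
  have [->|->] := case_split _ _ _ _ _ h1 h2 => //.
  by rewrite mulr_gt0 // (lt_trans ltr01).
have phi_ge : forall n, (n <= phi n)%N.
  elim => [|n IH] //; exact: leq_ltn_trans IH (phiS n).
pose j := fun k => (phi k.+1).-1.
have hj : forall k, (j k).+1 = phi k.+1.
  by move=> k; rewrite /j prednK //; exact: leq_ltn_trans (leq0n _) (phiS k).
have jk : forall k, (k <= j k)%N.
  by move=> k; rewrite -ltnS hj; exact: phi_ge.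
pose lamk := fun k => pos_part (fun t => w (j k) t + rho (j k) * e (g (x (j k).+1)) t).
have lamL2 : forall k, L2 mu (lamk k).
  move=> k; apply: L2_pos; apply: L2D; [exact: (S2_w _).1 | exact: L2Z].
exists (fun k => x (j k).+1), (fun k v => ipZ mu (lamk k) (e v)).
split.
  have -> : (fun k => x (j k).+1) = (fun k => (x \o phi) k.+1).
    by apply/funext => k; rewrite /= hj.
  by rewrite (cvg_shiftS (x \o phi)).
split; first by move=> k; exact: dual_ipZ.
split.
  move=> k v hv.
  rewrite (@ipZ_ae _ _ _ mu (lamk k) (e v) (pos_part (e v)) (lamL2 k) (e_L2 v)
    (L2_pos _ _ _ _ _ (e_L2 v))).
    by apply: ipZ_ge0 => t; apply: mulr_ge0; rewrite /pos_part /lamk le_max lexx orbT.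
  by apply: filterS hv => t h; rewrite /pos_part; apply/esym/max_idPl.
split.
  move=> eps e0; exact: (near_sub _ _ jk (S2_x _ e0)).
pose W := pos_part wmax.
have WL2 : L2 mu W by exact: L2_pos.
pose Kw := ipZ mu W W.
have Kw0 : 0 <= Kw.
  by apply: ipZ_ge0 => t; apply: mulr_ge0; rewrite /W /pos_part le_max lexx orbT.
have bnd : forall k, 0 <= ipZ mu (lamk k) (e (2^-1 *: (absY (g (x (j k).+1)) - g (x (j k).+1))))
    <= (rho (j k))^-1 * Kw.
  move=> k.
  set A := absY _; set Gy := g _.
  have GL2 : L2 mu (pos_part (fun t => -1 * e Gy t)) by apply: L2_pos; apply: L2Z.
  have E : {ae mu, forall t, e (2^-1 *: (A - Gy)) t = pos_part (fun t => -1 * e Gy t) t}.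
    have E1 := e_lin 2^-1 (A - Gy) 0; rewrite addr0 in E1.
    have E0 := e_lin 1 0 0; rewrite scaler0 addr0 in E0.
    have E2 := e_lin 1 A (- Gy); rewrite scale1r in E2.
    have E3 := e_lin (-1) Gy 0; rewrite addr0 scaleN1r in E3.
    have E4 := habs Gy.
    have := nearAnd _ _ _ _ _ _ E1 (nearAnd _ _ _ _ _ _ E2 (nearAnd _ _ _ _ _ _ E3 (nearAnd _ _ _ _ _ _ E0 E4))).
    apply: filterS => t [h1 [h2 [h3 [h0 h4]]]].
    rewrite h1 h2 h3 h4 /pos_part.
    have e00 : e 0 t = 0 by rewrite mul1r in h0; lra.
    rewrite e00.
    have [hx|hx] := leP 0 (e Gy t).
      rewrite ger0_norm //.
      have -> : Num.max (-1 * e Gy t) 0 = 0 by apply/max_idPr; lra.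
      lra.
    rewrite ltr0_norm //.
    have -> : Num.max (-1 * e Gy t) 0 = -1 * e Gy t by apply/max_idPl; lra.
    lra.
  rewrite (@ipZ_ae _ _ _ mu (lamk k) _ _ (lamL2 k) (e_L2 _) GL2 E).
  apply/andP; split.
    by apply: ipZ_ge0 => t; apply: mulr_ge0; rewrite /pos_part /lamk le_max lexx orbT.
  rewrite /Kw -(@ipZ_scale _ _ _ mu W W _ WL2 WL2).
  apply: (@ipZ_le _ _ _ mu _ _ _ _ (lamL2 k) GL2 WL2 (L2Z _ _ _ _ _ _ WL2)).
  - by move=> t; apply: mulr_ge0; rewrite /pos_part /lamk le_max lexx orbT.
  - move=> t; apply: mulr_ge0; first by rewrite /W /pos_part le_max lexx orbT.
    by apply: mulr_ge0; [rewrite invr_ge0 ltW | rewrite /W /pos_part le_max lexx orbT].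
  - apply: filterS (S2_w (j k)).2 => t /andP[w0 wW].
    apply: compl_bound => //.
    by rewrite /W /pos_part le_max wW.
exact: (cvg_bound0 _ _ _ _ _ Kw0 jk bnd rho_pos rho_infty).
Qed.
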